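(* Let $q\in\mathbb{C}\setminus\{0\}$ with $|q|\ne1$, $n\in\mathbb{N}$, $r\in(0,+\infty]$. Then $\mathcal{O}_q(\mathbb{D}_r^n)=\mathcal{O}_q(\mathbb{B}_r^n)$ as subspaces of the space of formal series $\sum_{k\in\mathbb{Z}_+^n}c_kx^k$ and as Fréchet algebras. Moreover, for each $\rho\in(0,r)$, on this algebra $$(|q|^{-2};|q|^{-2})_\infty^{n/2}\,\|\cdot\|_{\mathbb{D},\rho}\le\|\cdot\|_{\mathbb{B},\rho}\le\|\cdot\|_{\mathbb{D},\rho}\quad\text{if }|q|>1,$$ $$(|q|^{2};|q|^{2})_\infty^{n/2}\,\|\cdot\|_{\mathbb{D},\rho}\le\|\cdot\|_{\mathbb{B},\rho}\le\|\cdot\|_{\mathbb{D},\rho}\quad\text{if }|q|<1.$$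
   Context: $\mathcal{O}_q^{\mathrm{reg}}(\mathbb{C}^n)$: algebra generated by $x_1,\dots,x_n$ with $x_ix_j=qx_jx_i$ ($i<j$); basis $x^k=x_1^{k_1}\cdots x_n^{k_n}$, $k\in\mathbb{Z}_+^n$. Put $w_q(k)=1$ if $|q|\ge1$ and $w_q(k)=|q|^{\sum_{i<j}k_ik_j}$ if $|q|<1$; $u_q(k)=|q|^{\sum_{i<j}k_ik_j}$; $[m]_q=1+\dots+q^{m-1}$, $[m]_q!=[1]_q\cdots[m]_q$, $[0]_q!=1$, $[k]_q!=\prod_i[k_i]_q!$, $|k|=\sum k_i$; $(a;t)_\infty=\prod_{j\ge0}(1-at^j)$ for $|t|<1$. For $f=\sum_kc_kx^k$: $\|f\|_{\mathbb{D},\rho}=\sum_k|c_k|w_q(k)\rho^{|k|}$ and $\|f\|_{\mathbb{B},\rho}=\sum_k|c_k|\big([k]_{|q|^2}!/[|k|]_{|q|^2}!\big)^{1/2}u_q(k)\rho^{|k|}$. $\mathcal{O}_q(\mathbb{D}_r^n)$ (resp. $\mathcal{O}_q(\mathbb{B}_r^n)$) is the completion of $\mathcal{O}_q^{\mathrm{reg}}(\mathbb{C}^n)$ with respect to the submultiplicative norms $\|\cdot\|_{\mathbb{D},\rho}$ (resp. $\|\cdot\|_{\mathbb{B},\rho}$), $\rho\in(0,r)$; concretely it is the Fréchet algebra of formal series $\sum_kc_kx^k$ with all these norms finite, with multiplication extending that of $\mathcal{O}_q^{\mathrm{reg}}(\mathbb{C}^n)$. *)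

(* Defs.v *)
From Stdlib Require Import Reals ClassicalEpsilon.
Open Scope R_scope.

Definition Cplx := (R * R)%type.
Definition Cmod (z : Cplx) : R := sqrt (fst z ^ 2 + snd z ^ 2).

(* Multi-indices k in Z_+^n are represented by k : nat -> nat, of which only
   k 0, ..., k (n-1) are relevant (box sums only evaluate at k with k i = 0 for i >= n). *)
Definition multi := nat -> nat.

Definition fseries := multi -> Cplx.

Definition cons_idx (j : nat) (k : multi) : multi :=
  fun i => match i with O => j | S i' => k i' end.

(* sum of F k over the box {k in Z_+^n : k_i <= N for all i < n} *)
Fixpoint box_sum (n : nat) (F : multi -> R) (N : nat) : R :=
  match n with
  | O => F (fun _ => O)
  | S m => sum_f_R0 (fun j => box_sum m (fun k => F (cons_idx j k)) N) N
  end.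

Fixpoint nsum (m : nat) (f : nat -> nat) : nat :=
  match m with O => O | S m' => (nsum m' f + f m')%nat end.

Definition absk (n : nat) (k : multi) : nat := nsum n k.
Definition cross (n : nat) (k : multi) : nat :=
  nsum n (fun j => nsum j (fun i => (k i * k j)%nat)).

Fixpoint rsum (m : nat) (f : nat -> R) : R :=
  match m with O => 0 | S m' => rsum m' f + f m' end.
Fixpoint rprod (m : nat) (f : nat -> R) : R :=
  match m with O => 1 | S m' => rprod m' f * f m' end.

Definition qint (t : R) (m : nat) : R := rsum m (fun i => t ^ i).
Fixpoint qfact (t : R) (m : nat) : R :=
  match m with O => 1 | S m' => qfact t m' * qint t (S m') end.
Definition qfact_multi (t : R) (n : nat) (k : multi) : R :=
  rprod n (fun i => qfact t (k i)).

Definition wq (q : Cplx) (n : nat) (k : multi) : R :=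
  if Rle_dec 1 (Cmod q) then 1 else Cmod q ^ cross n k.
Definition uq (q : Cplx) (n : nat) (k : multi) : R := Cmod q ^ cross n k.

Definition termD (q : Cplx) (n : nat) (c : fseries) (rho : R) (k : multi) : R :=
  Cmod (c k) * wq q n k * rho ^ absk n k.
Definition termB (q : Cplx) (n : nat) (c : fseries) (rho : R) (k : multi) : R :=
  let t := Cmod q ^ 2 in
  Cmod (c k) * sqrt (qfact_multi t n k / qfact t (absk n k)) * uq q n k
    * rho ^ absk n k.

(* A series of nonnegative terms over Z_+^n: finite iff box partial sums are bounded;
   its value is the supremum of the box partial sums. *)
Definition sum_finite (n : nat) (F : multi -> R) : Prop :=
  exists M, forall N, box_sum n F N <= M.
Definition sum_value (n : nat) (F : multi -> R) : R :=
  epsilon (inhabits 0) (fun l => is_lub (fun x => exists N, x = box_sum n F N) l).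

Definition normD q n c rho := sum_value n (termD q n c rho).
Definition normB q n c rho := sum_value n (termB q n c rho).

(* r in (0, +oo]: None = +oo *)
Definition ext_pos (r : option R) : Prop :=
  match r with Some r' => 0 < r' | None => True end.
Definition below (r : option R) (rho : R) : Prop :=
  match r with Some r' => rho < r' | None => True end.

Definition in_OD (q : Cplx) (n : nat) (r : option R) (c : fseries) : Prop :=
  forall rho, 0 < rho -> below r rho -> sum_finite n (termD q n c rho).
Definition in_OB (q : Cplx) (n : nat) (r : option R) (c : fseries) : Prop :=
  forall rho, 0 < rho -> below r rho -> sum_finite n (termB q n c rho).

Definition qpoch_inf (a t : R) : R :=
  epsilon (inhabits 0)
    (fun l => Un_cv (fun N => rprod (S N) (fun j => 1 - a * t ^ j)) l).

(* Main.v *)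
Require Import Defs.
From Stdlib Require Import Reals Lra Lia ClassicalEpsilon FunctionalExtensionality.
From Stdlib Require Import Reals.
Open Scope R_scope.

Definition pp (s : R) (m : nat) : R := rprod m (fun j => 1 - s * s ^ j).

Lemma qint_S t m : qint t (S m) = qint t m + t ^ m.
Proof. reflexivity. Qed.

Lemma qint_mul s m : 0 <= s -> qint s m * (1 - s) = 1 - s ^ m.
Proof. intros _. induction m; unfold qint in *; simpl; [ring|]. 
  rewrite Rmult_plus_distr_r, IHm. ring. Qed.

Lemma qint_ge1 s m : 0 <= s -> 1 <= qint s (S m).
Proof. intros Hs. induction m. unfold qint; simpl; lra.
  rewrite qint_S. pose proof (pow_le s (S m) Hs). lra. Qed.

Lemma qint_nonneg s m : 0 <= s -> 0 <= qint s m.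
Proof. intros Hs; destruct m. unfold qint; simpl; lra. pose proof (qint_ge1 s m Hs); lra. Qed.

Lemma qint_mono s a b : 0 <= s -> (a <= b)%nat -> qint s a <= qint s b.
Proof. intros Hs H; induction H; [lra|]. rewrite qint_S. pose proof (pow_le s m Hs); lra. Qed.

Lemma qfact_pos s m : 0 <= s -> 0 < qfact s m.
Proof. intros Hs; induction m; simpl; [lra|]. pose proof (qint_ge1 s m Hs). nra. Qed.

Lemma qfact_mul s m : 0 <= s -> qfact s m * (1 - s) ^ m = pp s m.
Proof. intros Hs; induction m; unfold pp in *; simpl; [ring|].
  rewrite <- IHm. replace (1 - s * s ^ m) with (qint s (S m) * (1 - s)).
  ring. rewrite qint_mul; auto. Qed.

Lemma qfact_add s a b : 0 <= s -> qfact s a * qfact s b <= qfact s (a + b).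
Proof. intros Hs; induction b. rewrite Nat.add_0_r; simpl; lra.
  rewrite Nat.add_succ_r; simpl.
  pose proof (qfact_pos s a Hs). pose proof (qfact_pos s b Hs).
  pose proof (qint_mono s (S b) (S (a+b)) Hs ltac:(lia)).
  pose proof (qint_nonneg s (S b) Hs).
  apply Rle_trans with (qfact s (a+b) * qint s (S b)).
  rewrite <- Rmult_assoc. apply Rmult_le_compat_r; lra.
  apply Rmult_le_compat_l; [pose proof (qfact_pos s (a+b) Hs)|]; lra. Qed.

Lemma qfm_le s n k : 0 <= s -> qfact_multi s n k <= qfact s (absk n k).
Proof. intros Hs; induction n; unfold qfact_multi, absk in *; simpl. lra.
  apply Rle_trans with (qfact s (nsum n k) * qfact s (k n)).
  apply Rmult_le_compat_r. left; apply qfact_pos; auto. auto.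
  apply qfact_add; auto. Qed.

Lemma qfm_pos s n k : 0 <= s -> 0 < qfact_multi s n k.
Proof. intros Hs; induction n; unfold qfact_multi in *; simpl. lra.
  pose proof (qfact_pos s (k n) Hs). nra. Qed.

Lemma pow_le1 x m : 0 <= x <= 1 -> x ^ m <= 1.
Proof. intros H; induction m; simpl; [lra|]. pose proof (pow_le x m ltac:(lra)). nra. Qed.

Lemma pp_pos_le s m : 0 <= s < 1 -> 0 < pp s m <= 1.
Proof. intros Hs; induction m; unfold pp in *; simpl. lra.
  assert (0 <= s * s ^ m <= s). { pose proof (pow_le s m ltac:(lra)).
   pose proof (pow_le1 s m ltac:(lra)). split; nra. }
  nra. Qed.

Lemma rsum_geo s m : rsum m (fun j => s * s ^ j) * (1 - s) = s - s * s ^ m.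
Proof. induction m; simpl; [ring|]. rewrite Rmult_plus_distr_r, IHm. ring. Qed.

Lemma pp_exp s m : 0 <= s < 1 ->
  1 <= pp s m * exp (rsum m (fun j => s * s ^ j) / (1 - s)).
Proof. intros Hs; induction m; unfold pp in *; simpl.
  rewrite Rdiv_0_l, exp_0; lra.
  set (x := s * s ^ m) in *.
  assert (0 <= x <= s). { pose proof (pow_le s m ltac:(lra)).
   pose proof (pow_le1 s m ltac:(lra)). unfold x; split; nra. }
  unfold Rdiv in *; rewrite Rmult_plus_distr_r, exp_plus.
  set (A := rprod m (fun j : nat => 1 - s * s ^ j)) in *.
  set (E := exp (rsum m (fun j : nat => s * s ^ j) * / (1 - s))) in *.
  assert (1 <= (1 - x) * exp (x * / (1 - s))).
  { pose proof (exp_ineq1_le (x * / (1 - s))).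
    assert (1 <= (1 - x) * (1 + x * / (1 - s))).
    { assert ((1 - x) * (1 + x * / (1 - s)) - 1 = x * (s - x) / (1 - s)) by (field; lra).
      assert (0 <= x * (s - x) / (1 - s)). { apply Rmult_le_pos. nra. left; apply Rinv_0_lt_compat; lra. }
      lra. }
    assert (0 <= 1 - x) by lra. nra. }
  assert (0 <= A * E) by lra.
  assert (0 <= exp (x * / (1 - s))) by (left; apply exp_pos).
  replace (A * (1 - x) * (E * exp (x * / (1 - s)))) with ((A * E) * ((1 - x) * exp (x * / (1 - s)))) by ring.
  nra. Qed.

Lemma pp_lb s m : 0 <= s < 1 -> exp (- (s / (1 - s) / (1 - s))) <= pp s m.
Proof. intros Hs. pose proof (pp_exp s m Hs).
  set (f := rsum m (fun j => s * s ^ j)) in *.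
  assert (f <= s / (1 - s)). { pose proof (rsum_geo s m). fold f in H0.
    pose proof (pow_le s m ltac:(lra)). apply Rmult_le_reg_r with (1 - s). lra.
    unfold Rdiv; rewrite Rmult_assoc, Rinv_l by lra. assert (0 <= s * s ^ m) by (apply Rmult_le_pos; lra). lra. }
  assert (exp (- (s / (1 - s) / (1 - s))) <= exp (- (f / (1 - s)))).
  { destruct (Req_dec (s / (1 - s) / (1 - s)) (f / (1 - s))) as [E|E]. rewrite E; lra.
    left; apply exp_increasing. apply Ropp_lt_contravar.
    assert (f / (1 - s) <= s / (1 - s) / (1 - s)). { unfold Rdiv. apply Rmult_le_compat_r.
      left; apply Rinv_0_lt_compat; lra. lra. } lra. }
  assert (exp (- (f / (1 - s))) <= pp s m).
  { pose proof (exp_pos (f / (1 - s))).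
    rewrite exp_Ropp. apply Rmult_le_reg_r with (exp (f / (1 - s))). auto.
    rewrite Rinv_l by lra. lra. }
  lra. Qed.

Lemma pp_S s m : pp s (S m) = pp s m * (1 - s * s ^ m).
Proof. reflexivity. Qed.

Definition Cst s := exp (- (s / (1 - s) / (1 - s))).

Lemma qpoch_spec s : 0 <= s < 1 ->
  0 < qpoch_inf s s /\ forall m, qpoch_inf s s <= pp s m.
Proof. intros Hs.
  set (u := fun N => rprod (S N) (fun j => 1 - s * s ^ j)).
  assert (Hd : Un_decreasing u). { intro N. unfold u. change (pp s (S (S N)) <= pp s (S N)).
    rewrite (pp_S s (S N)).
    pose proof (pp_pos_le s (S N) Hs).
    assert (0 <= s * s ^ (S N)) by (apply Rmult_le_pos; [lra| apply pow_le; lra]).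
    nra. }
  assert (Hlb : has_lb u). { exists 0. intros x [N ->]. unfold opp_seq, u. pose proof (pp_pos_le s (S N) Hs).
    unfold pp in H. lra. }
  destruct (decreasing_cv u Hd Hlb) as [l Hl].
  assert (Hq : Un_cv u (qpoch_inf s s)).
  { unfold qpoch_inf. apply epsilon_spec. exists l. exact Hl. }
  set (P := qpoch_inf s s) in *.
  pose proof (exp_pos (- (s / (1 - s) / (1 - s)))) as Hc.
  split.
  - apply Rlt_le_trans with (exp (- (s / (1 - s) / (1 - s)))); auto.
    destruct (Rle_or_lt (exp (- (s / (1 - s) / (1 - s)))) P) as [|H]; auto.
    exfalso. destruct (Hq (exp (- (s / (1 - s) / (1 - s))) - P)) as [N HN]. lra.
    specialize (HN N (le_n N)). unfold Rdist in HN.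
    pose proof (pp_lb s (S N) Hs). unfold u in HN. fold (pp s (S N)) in HN.
    apply Rabs_def2 in HN. lra.
  - intros m. destruct m.
    + pose proof (decreasing_ineq u P Hd Hq 0). unfold u in H. simpl in H. unfold pp; simpl.
      assert (0 <= s * 1) by lra. lra.
    + pose proof (decreasing_ineq u P Hd Hq m). exact H. Qed.

Lemma nsum_mulr n (k : multi) c : nsum n (fun i => (k i * c)%nat) = (nsum n k * c)%nat.
Proof. induction n; simpl; lia. Qed.

Definition tri m := nsum m (fun i => i).

Lemma tri_S m : tri (S m) = (tri m + m)%nat.
Proof. reflexivity. Qed.

Lemma tri_add a b : tri (a + b) = (tri a + tri b + a * b)%nat.
Proof. induction b. rewrite Nat.add_0_r, Nat.mul_0_r. change (tri 0) with 0%nat. lia.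
  rewrite Nat.add_succ_r, !tri_S, IHb, Nat.mul_succ_r. lia. Qed.

Lemma tri_absk n k : tri (absk n k) = (nsum n (fun i => tri (k i)) + cross n k)%nat.
Proof. induction n; unfold absk, cross in *; simpl. reflexivity.
  rewrite tri_add, IHn, nsum_mulr. lia. Qed.

Lemma qint_shift t m : qint t (S m) = 1 + t * qint t m.
Proof. induction m. unfold qint; simpl; ring.
  rewrite (qint_S t (S m)). rewrite IHm at 1. rewrite (qint_S t m). simpl; ring. Qed.

Lemma qint_inv t s m : s * t = 1 -> qint t (S m) = t ^ m * qint s (S m).
Proof. intros H; induction m. unfold qint; simpl; ring.
  rewrite (qint_S s (S m)), (qint_shift t (S m)), IHm.
  replace (t ^ S m * (qint s (S m) + s ^ S m)) with (t * (t ^ m * qint s (S m)) + (s * t) ^ S m).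
  rewrite H, pow1. ring.
  rewrite Rpow_mult_distr. simpl. ring. Qed.

Lemma qfact_inv t s m : s * t = 1 -> qfact t m = t ^ tri m * qfact s m.
Proof. intros H; induction m. simpl. ring.
  simpl qfact. rewrite IHm, (qint_inv t s m H). unfold tri; simpl nsum. rewrite pow_add. ring. Qed.

Lemma qfm_inv t s n k : s * t = 1 ->
  qfact_multi t n k = t ^ nsum n (fun i => tri (k i)) * qfact_multi s n k.
Proof. intros H; induction n; unfold qfact_multi in *; simpl. ring.
  rewrite IHn, (qfact_inv t s (k n) H), pow_add. ring. Qed.

Lemma ratio_inv t s n k : s * t = 1 -> 0 <= s -> 0 < t ->
  qfact_multi t n k / qfact t (absk n k) * t ^ cross n k =
  qfact_multi s n k / qfact s (absk n k).
Proof. intros H Hs Ht. rewrite (qfm_inv t s n k H), (qfact_inv t s _ H), tri_absk, pow_add.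
  pose proof (qfact_pos s (absk n k) Hs).
  assert (t ^ nsum n (fun i => tri (k i)) <> 0) by (apply pow_nonzero; lra).
  assert (t ^ cross n k <> 0) by (apply pow_nonzero; lra).
  field. repeat split; lra. Qed.

Lemma rprod_le n (f : nat -> R) P : 0 <= P -> (forall i, P <= f i) -> P ^ n <= rprod n f.
Proof. intros HP H; induction n; simpl. lra.
  rewrite Rmult_comm. apply Rmult_le_compat; auto. apply pow_le; auto. Qed.

Lemma qfm_pp s n k : 0 <= s ->
  qfact_multi s n k * (1 - s) ^ absk n k = rprod n (fun i => pp s (k i)).
Proof. intros Hs; induction n; unfold qfact_multi, absk in *; simpl. ring.
  rewrite <- IHn, <- (qfact_mul s (k n) Hs), pow_add. ring. Qed.

Lemma ratio_bounds s n k : 0 <= s < 1 ->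
  Rpower (qpoch_inf s s) (INR n / 2) <= sqrt (qfact_multi s n k / qfact s (absk n k)) <= 1.
Proof. intros Hs. destruct (qpoch_spec s Hs) as [HP HPm].
  pose proof (qfact_pos s (absk n k) ltac:(lra)). pose proof (qfm_pos s n k ltac:(lra)).
  pose proof (qfm_le s n k ltac:(lra)).
  split.
  - unfold Rdiv at 1. rewrite <- Rpower_mult, Rpower_pow by auto. rewrite Rpower_sqrt by (apply pow_lt; auto).
    apply sqrt_le_1_alt.
    assert (E : qfact_multi s n k / qfact s (absk n k) =
      rprod n (fun i => pp s (k i)) / pp s (absk n k)).
    { rewrite <- qfm_pp, <- qfact_mul by lra. field. split. apply pow_nonzero; lra. lra. }
    rewrite E. pose proof (pp_pos_le s (absk n k) Hs).
    pose proof (rprod_le n (fun i => pp s (k i)) (qpoch_inf s s) ltac:(lra) (fun i => HPm (k i))).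
    pose proof (pow_le (qpoch_inf s s) n ltac:(lra)).
    apply Rle_trans with (rprod n (fun i => pp s (k i))); auto.
    apply Rmult_le_reg_r with (pp s (absk n k)). lra.
    unfold Rdiv; rewrite Rmult_assoc, Rinv_l by lra. nra.
  - rewrite <- sqrt_1. apply sqrt_le_1_alt.
    apply Rmult_le_reg_r with (qfact s (absk n k)). lra.
    unfold Rdiv; rewrite Rmult_assoc, Rinv_l by lra. lra. Qed.

Lemma sum_f_le (f g : nat -> R) N : (forall i, f i <= g i) -> sum_f_R0 f N <= sum_f_R0 g N.
Proof. intros H; induction N; simpl; [apply H|]. pose proof (H (S N)); lra. Qed.

Lemma sum_f_scal (f : nat -> R) C N : sum_f_R0 (fun i => C * f i) N = C * sum_f_R0 f N.
Proof. induction N; simpl; [ring|]. rewrite IHN; ring. Qed.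

Lemma box_sum_le n : forall (F G : multi -> R) N, (forall k, F k <= G k) -> box_sum n F N <= box_sum n G N.
Proof. induction n; intros F G N H; simpl. apply H.
  apply sum_f_le. intros j. apply IHn. intros k; apply H. Qed.

Lemma box_sum_scal n : forall (F : multi -> R) C N, box_sum n (fun k => C * F k) N = C * box_sum n F N.
Proof. induction n; intros F C N; simpl. reflexivity.
  rewrite <- sum_f_scal. f_equal. apply functional_extensionality_dep. intros j.
  apply (IHn (fun k => F (cons_idx j k))). Qed.

Lemma sv_spec n F : sum_finite n F ->
  is_lub (fun x => exists N, x = box_sum n F N) (sum_value n F).
Proof. intros [M HM]. unfold sum_value. apply epsilon_spec.
  destruct (completeness (fun x => exists N, x = box_sum n F N)) as [l Hl].
  exists M. intros x [N ->]. apply HM. exists (box_sum n F 0). exists 0%nat; reflexivity.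
  exists l; exact Hl. Qed.

Lemma norm_cmp n (F G : multi -> R) C : 0 < C -> (forall k, C * F k <= G k <= F k) ->
  (sum_finite n F <-> sum_finite n G) /\
  (sum_finite n F -> C * sum_value n F <= sum_value n G /\ sum_value n G <= sum_value n F).
Proof. intros HC H.
  assert (HGF : forall N, box_sum n G N <= box_sum n F N). { intros N; apply box_sum_le. intros k; apply H. }
  assert (HFG : forall N, C * box_sum n F N <= box_sum n G N).
  { intros N. rewrite <- box_sum_scal. apply box_sum_le. intros k; apply H. }
  assert (fin : sum_finite n F <-> sum_finite n G).
  { split; intros [M HM]. exists M. intros N. specialize (HGF N); specialize (HM N); lra.
    exists (M / C). intros N. specialize (HFG N); specialize (HM N).
    apply Rmult_le_reg_l with C; auto. unfold Rdiv. rewrite <- Rmult_assoc, (Rmult_comm C M), Rmult_assoc, Rinv_r by lra. lra. }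
  split; auto. intros HF. pose proof HF as HG. apply fin in HG.
  destruct (sv_spec n F HF) as [UF LF]. destruct (sv_spec n G HG) as [UG LG].
  split.
  - assert (sum_value n F <= sum_value n G / C).
    { apply LF. intros x [N ->]. specialize (HFG N).
      assert (box_sum n G N <= sum_value n G) by (apply UG; exists N; reflexivity).
      apply Rmult_le_reg_l with C; auto. replace (C * (sum_value n G / C)) with (sum_value n G) by (field; lra). lra. }
    apply Rmult_le_compat_l with (r := C) in H0; [| lra].
    replace (C * (sum_value n G / C)) with (sum_value n G) in H0 by (field; lra). lra.
  - apply LG. intros x [N ->]. specialize (HGF N).
    assert (box_sum n F N <= sum_value n F) by (apply UF; exists N; reflexivity). lra. Qed.

Definition Rt s n k := qfact_multi s n k / qfact s (absk n k).

Lemma Cmod_nonneg q : 0 <= Cmod q.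
Proof. apply sqrt_pos. Qed.

Lemma termD_nonneg q n c rho k : 0 < rho -> 0 <= termD q n c rho k.
Proof. intros Hr. unfold termD, wq. pose proof (Cmod_nonneg (c k)). pose proof (Cmod_nonneg q).
  pose proof (pow_le rho (absk n k) ltac:(lra)).
  destruct (Rle_dec 1 (Cmod q)); apply Rmult_le_pos; try apply Rmult_le_pos; try lra; apply pow_le; lra. Qed.

Lemma termB_lt1 q n c rho k : Cmod q < 1 ->
  termB q n c rho k = sqrt (Rt (Cmod q ^ 2) n k) * termD q n c rho k.
Proof. intros H. unfold termB, termD, wq, uq, Rt. destruct (Rle_dec 1 (Cmod q)). lra. ring. Qed.

Lemma termB_gt1 q n c rho k : 1 < Cmod q ->
  termB q n c rho k = sqrt (Rt (/ (Cmod q ^ 2)) n k) * termD q n c rho k.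
Proof. intros H. unfold termB, termD, wq, uq. destruct (Rle_dec 1 (Cmod q)); [|lra].
  set (t := Cmod q ^ 2).
  assert (Ht : 1 < t). { unfold t. simpl. nra. }
  assert (E : Rt (/ t) n k = Rt t n k * (Cmod q ^ cross n k) ^ 2).
  { unfold Rt. rewrite <- (ratio_inv t (/ t) n k). unfold t. rewrite <- !pow_mult. f_equal. f_equal. lia.
    field; lra. left; apply Rinv_0_lt_compat; lra. lra. }
  rewrite E. assert (0 <= Rt t n k).
  { unfold Rt. pose proof (qfact_pos t (absk n k) ltac:(lra)). pose proof (qfm_pos t n k ltac:(lra)).
    unfold Rdiv. apply Rmult_le_pos. lra. left; apply Rinv_0_lt_compat; lra. }
  rewrite sqrt_mult_alt, sqrt_pow2 by (auto; apply pow_le; lra). unfold Rt. ring. Qed.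

Lemma case_gen q n r s : 0 <= s < 1 ->
  (forall c rho k, termB q n c rho k = sqrt (Rt s n k) * termD q n c rho k) ->
  (forall c, in_OD q n r c <-> in_OB q n r c) /\
  (forall c rho, in_OD q n r c -> 0 < rho -> below r rho ->
     Rpower (qpoch_inf s s) (INR n / 2) * normD q n c rho <= normB q n c rho
     /\ normB q n c rho <= normD q n c rho).
Proof. intros Hs HB.
  set (C := Rpower (qpoch_inf s s) (INR n / 2)).
  assert (HC : 0 < C) by (unfold C, Rpower; apply exp_pos).
  assert (Hpt : forall c rho, 0 < rho -> forall k,
    C * termD q n c rho k <= termB q n c rho k <= termD q n c rho k).
  { intros c rho Hr k. rewrite HB. pose proof (termD_nonneg q n c rho k Hr).
    pose proof (ratio_bounds s n k Hs). fold (Rt s n k) in H0. fold C in H0.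
    split; nra. }
  split.
  - intros c. split; intros H rho Hr Hb; apply (proj1 (norm_cmp n _ _ C HC (Hpt c rho Hr))); auto.
  - intros c rho H Hr Hb. apply (proj2 (norm_cmp n _ _ C HC (Hpt c rho Hr))). auto.
Qed.

Theorem theorem4p2 (q : Cplx) (n : nat) (r : option R)
  (hq0 : q <> (0, 0)) (hq1 : Cmod q <> 1) (hr : ext_pos r) :
  (forall c : fseries, in_OD q n r c <-> in_OB q n r c) /\
  (forall (c : fseries) (rho : R), in_OD q n r c -> 0 < rho -> below r rho ->
     (1 < Cmod q ->
        Rpower (qpoch_inf (/ (Cmod q ^ 2)) (/ (Cmod q ^ 2))) (INR n / 2)
          * normD q n c rho <= normB q n c rho
        /\ normB q n c rho <= normD q n c rho) /\
     (Cmod q < 1 ->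
        Rpower (qpoch_inf (Cmod q ^ 2) (Cmod q ^ 2)) (INR n / 2)
          * normD q n c rho <= normB q n c rho
        /\ normB q n c rho <= normD q n c rho)).
Proof.
  pose proof (Cmod_nonneg q) as H0.
  destruct (Rtotal_order (Cmod q) 1) as [Hlt|[Heq|Hgt]]; [| lra |].
  - assert (Hs : 0 <= Cmod q ^ 2 < 1) by (simpl; split; nra).
    destruct (case_gen q n r (Cmod q ^ 2) Hs (fun c rho k => termB_lt1 q n c rho k Hlt)) as [A B].
    split; auto. intros c rho H Hr Hb. split; [intros; lra|]. intros _. auto.
  - assert (Hs : 0 <= / (Cmod q ^ 2) < 1).
    { assert (1 < Cmod q ^ 2) by (simpl; nra). split. left; apply Rinv_0_lt_compat; lra.
      rewrite <- Rinv_1. apply Rinv_lt_contravar; lra. }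
    destruct (case_gen q n r _ Hs (fun c rho k => termB_gt1 q n c rho k Hgt)) as [A B].
    split; auto. intros c rho H Hr Hb. split; [|intros; lra]. intros _. auto.
Qed.
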